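(* Let $h,n,k\geq2$ be integers with $k\leq n!$. Then $\{V\times\{id\}: V\in\mathrm{BGR}_h(k)\}\subseteq\mathrm{SPFAG}_h(n)$. If $k=n=2$, equality holds: $\{V\times\{id\}: V\in\mathrm{BGR}_h(2)\}=\mathrm{SPFAG}_h(2)$, and consequently $\{V\times\{id\}: V\in\bigcup_{h\geq2}\mathrm{BGR}_h(2)\}=\bigcup_{h\geq2}\mathrm{SPFAG}_h(2)$.
   Context: A $k$-valued Boolean function is a function $f:\{0,1\}^h\to\{0,\dots,k-1\}$. For $\varphi\in S_h$ and $x\in\{0,1\}^h$, $x^\varphi=(x_{\varphi^{-1}(1)},\dots,x_{\varphi^{-1}(h)})$; the invariance group of $f$ is $S(f)=\{\varphi\in S_h: f(x^\varphi)=f(x)\ \forall x\}$; $\mathrm{BGR}_h(k)=\{S(f): f \text{ a } k\text{-valued Boolean function on }\{0,1\}^h\}$. Permutations compose as $(\sigma\tau)(x)=\sigma(\tau(x))$. Let $G=S_h\times S_n$ and $\mathcal{P}=(S_n)^h$ (preference profiles), with $G$ acting by $(p^{(\varphi,\psi)})_i=\psi\,p_{\varphi^{-1}(i)}$. A social preference function (SPF) is any $F:\mathcal{P}\to S_n$; $G(F)=\{(\varphi,\psi)\in G: F(p^{(\varphi,\psi)})=\psi F(p)\ \forall p\}$ and $G_1(F)=G(F)\cap(S_h\times\{id\})$. $\mathrm{SPFAG}_h(n)$ is the set of subgroups $U\leq S_h\times\{id\}$ with $U=G_1(F)$ for some SPF $F$ on $(S_n)^h$. *)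

(* Defs.v *)
From mathcomp Require Import all_boot all_fingroup.
Set Implicit Arguments. Unset Strict Implicit. Unset Printing Implicit Defensive.
Local Open Scope group_scope.

Definition bvec (h : nat) := {ffun 'I_h -> bool}.

(* Composition in the paper's convention: (compp s t) x = s (t x).
   (MathComp's product s * t is "first s, then t".) *)
Definition compp (n : nat) (s t : 'S_n) : 'S_n := t * s.

Lemma comppE n (s t : 'S_n) x : compp s t x = s (t x).
Proof. by rewrite /compp permM. Qed.

Definition bact (h : nat) (x : bvec h) (phi : 'S_h) : bvec h :=
  [ffun i => x (phi^-1 i)].

Definition invgroup (h k : nat) (f : bvec h -> 'I_k) : {set 'S_h} :=
  [set phi | [forall x : bvec h, f (bact x phi) == f x]].

Definition BGR (h k : nat) (V : {set 'S_h}) : Prop :=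
  exists f : bvec h -> 'I_k, invgroup f = V.

Definition profile (h n : nat) := {ffun 'I_h -> 'S_n}.

Definition pact (h n : nat) (p : profile h n) (phi : 'S_h) (psi : 'S_n)
  : profile h n := [ffun i => compp psi (p (phi^-1 i))].

Definition Gsym (h n : nat) (F : profile h n -> 'S_n) : {set 'S_h * 'S_n} :=
  [set g | [forall p : profile h n, F (pact p g.1 g.2) == compp g.2 (F p)]].

Definition G1sym (h n : nat) (F : profile h n -> 'S_n) : {set 'S_h * 'S_n} :=
  Gsym F :&: setX [set: 'S_h] [set 1].

Definition SPFAG (h n : nat) (U : {set 'S_h * 'S_n}) : Prop :=
  exists F : profile h n -> 'S_n, G1sym F = U.

Definition times_id (h n : nat) (V : {set 'S_h}) : {set 'S_h * 'S_n} :=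
  setX V [set 1].

Arguments BGR h k V : clear implicits.
Arguments SPFAG h n U : clear implicits.
Arguments times_id {h} n V.

(* Main.v *)
Require Import Defs.
From mathcomp Require Import all_boot all_fingroup.
Set Implicit Arguments. Unset Strict Implicit. Unset Printing Implicit Defensive.
Local Open Scope group_scope.

Lemma part1 h n k (f : bvec h -> 'I_k) :
  2 <= k -> k <= n`! -> SPFAG h n (times_id n (invgroup f)).
Proof.
move=> k2 kn.
have Hk : k <= #|{perm 'I_n}| by rewrite card_Sn.
pose g (i : 'I_k) : 'S_n := enum_val (widen_ord Hk i).
have ginj : injective g.
  by move=> i j /enum_val_inj /(congr1 val) /= /val_inj.
pose i0 : 'I_k := Ordinal (ltnW k2).
pose i1 : 'I_k := Ordinal k2.
pose xof (p : profile h n) : bvec h := [ffun i => p i == g i0].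
pose pof (x : bvec h) : profile h n := [ffun i => if x i then g i0 else g i1].
have g10 : (g i1 == g i0) = false.
  by apply/negbTE/negP => /eqP /ginj /(congr1 val).
have xpof x : xof (pof x) = x.
  by apply/ffunP => i; rewrite !ffunE; case: (x i); rewrite ?eqxx ?g10.
exists (fun p => g (f (xof p))).
apply/setP => -[phi psi]; rewrite !inE /=.
case: (eqVneq psi 1) => [->|]; last by rewrite !andbF.
rewrite !andbT.
have xofE p : xof (pact p phi 1) = bact (xof p) phi.
  by apply/ffunP => i; rewrite !ffunE /compp mulg1.
apply/forallP/forallP => H x.
- have := H (pof x); rewrite /compp mulg1 xofE xpof => /eqP /ginj ->.
  by [].
- by rewrite /compp mulg1 xofE (eqP (H _)).
Qed.

Lemma part2 h (U : {set 'S_h * 'S_2}) :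
  SPFAG h 2 U <-> exists V : {set 'S_h}, BGR h 2 V /\ U = times_id 2 V.
Proof.
split; last first.
  by case=> V [[f <-] ->]; apply: part1.
case=> F <-.
pose a : 'S_2 := 1.
pose b : 'S_2 := tperm ord0 ord_max.
have ab : a != b.
  apply/negP => /eqP /(congr1 (fun s : 'S_2 => s ord0)).
  by rewrite /a /b perm1 tpermL.
have allS (s : 'S_2) : s = a \/ s = b.
  have E : [set a; b] = setT.
    by apply/eqP; rewrite eqEcard subsetT cardsT card_Sn cards2 ab.
  have : s \in [set a; b] by rewrite E inE.
  by rewrite in_set2 => /orP [] /eqP; [left|right].
pose enc (s : 'S_2) : 'I_2 := if s == a then ord0 else ord_max.
have encinj : injective enc.
  move=> s t; rewrite /enc.
  by case: (allS s) => ->; case: (allS t) => ->; rewrite ?eqxx // eq_sym (negbTE ab).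
pose pof (x : bvec h) : profile h 2 := [ffun i => if x i then a else b].
pose xof (p : profile h 2) : bvec h := [ffun i => p i == a].
have pxof p : pof (xof p) = p.
  apply/ffunP => i; rewrite !ffunE.
  by case: (allS (p i)) => ->; rewrite ?eqxx // eq_sym (negbTE ab).
pose f (x : bvec h) := enc (F (pof x)).
exists (invgroup f); split; first by exists f.
apply/setP => -[phi psi]; rewrite !inE /=.
case: (eqVneq psi 1) => [->|]; last by rewrite !andbF.
rewrite !andbT.
have pofE x : pof (bact x phi) = pact (pof x) phi 1.
  by apply/ffunP => i; rewrite !ffunE /compp mulg1.
apply/forallP/forallP => H.
- move=> x; rewrite /f pofE (eqP (H _)) /compp mulg1 //.
- move=> p; rewrite -(pxof p) -pofE /compp mulg1.
  by have := H (xof p) => /eqP /encinj ->.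
Qed.

Theorem mainTheorem19 (h n k : nat) :
  2 <= h -> 2 <= n -> 2 <= k -> k <= n`! ->
  (forall V : {set 'S_h}, BGR h k V -> SPFAG h n (times_id n V))
  /\ (k = 2 -> n = 2 ->
      (forall U : {set 'S_h * 'S_n},
         SPFAG h n U <-> exists V : {set 'S_h}, BGR h 2 V /\ U = times_id n V)
      /\ (forall U : {h' : nat & {set 'S_h' * 'S_n}},
            (2 <= projT1 U /\ SPFAG (projT1 U) n (projT2 U)) <->
            (2 <= projT1 U /\ exists V : {set 'S_(projT1 U)},
                 BGR (projT1 U) 2 V /\ projT2 U = times_id n V))).
Proof.
move=> _ _ k2 kn; split.
  by move=> V [f <-]; apply: part1.
move=> Ek En; subst k n; split; first by move=> U; apply: part2.
move=> [h' U] /=; split; case=> H1 H2; split => //; by apply/part2.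
Qed.
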